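(* Let $M=\mathbb{R}_{\max}$ and $R=s(M)$ be its symmetrization hyperfield. Let $f\in M[x_1,\dots,x_n]$ be a polynomial written as a sum $f=\sum_{i=1}^k m_i$ of $k\ge1$ monomials $m_i=c_iX^{I_i}$ with $c_i\in\mathbb{R}$ and pairwise distinct multi-indices $I_i\in\mathbb{N}^n$. For each $i$ let \[\tilde f_{\hat i}:=\sum_{j\neq i}(c_j,1)X^{I_j}+(c_i,-1)X^{I_i}\in R[x_1,\dots,x_n],\] let $V(\tilde f_{\hat i}):=\{z\in R^n\mid 0_R\in\tilde f_{\hat i}(z)\}$ and $HV(f):=\bigcup_{i=1}^kV(\tilde f_{\hat i})$. Let $\varphi=s^n:M^n\to R^n$ be the coordinatewise map $a\mapsto(a,1)$ (with $-\infty\mapsto 0_R$). Then $\varphi(\operatorname{trop}(V(f)))=HV(f)\cap\operatorname{Im}(\varphi)$; in particular $\varphi$ restricts to a bijection $\operatorname{trop}(V(f))\to HV(f)\cap\operatorname{Im}(\varphi)$.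
   Context: $\mathbb{R}_{\max}=(\mathbb{R}\cup\{-\infty\},\max,+)$ is the tropical semifield: its ''addition'' is $\max$ (zero element $0_M=-\infty$) and its ''multiplication'' is ordinary addition (unit $0$). For a monomial $m=cX^I$ and $a\in M^n$, $m(a)=c+\sum_l I_l a_l$ (ordinary arithmetic, with $-\infty$ absorbing). $\operatorname{trop}(V(f))$ is the set of $a\in M^n$ such that the value $\max_i m_i(a)$ is either $-\infty$ or is attained by at least two distinct indices $i$. The symmetrization $R=s(M)$ has elements $(t,1)$, $(t,-1)$ for $t\in\mathbb{R}$ together with $0_R=(-\infty,1)=(-\infty,-1)$; write $|(t,p)|=t$. Its hyperaddition is: for $x,y\in R$, $x+y=\{x\}$ if $|x|>|y|$ or $x=y$; $x+y=\{y\}$ if $|x|<|y|$; and if $|x|=|y|$ with opposite signs, $x+y=\{(t,\pm1)\mid t\le|x|\}$ (including $0_R$). Multiplication is $(t,p)(u,q)=(t+u,pq)$ with $0_R$ absorbing. $R$ is a hyperfield. For a polynomial $g=\sum_I a_IX^I$ over $R$ (finite formal sum, no repeated multi-index) and $z\in R^n$, the evaluation $g(z)$ is the subset $\sum_I a_Iz^I\subseteq R$ computed with the hyperaddition (sums of sets as $A+B=\bigcup_{a\in A,b\in B}a+b$). *)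

(* Defs.v *)
From mathcomp Require Import all_boot.
From Stdlib Require Import Reals.
Set Implicit Arguments. Unset Strict Implicit. Unset Printing Implicit Defensive.

(* None = -oo (the zero 0_M), Some t = the real t. *)
Definition M := option R.

Definition Mlt (x y : M) : Prop :=
  match x, y with
  | None, Some _ => True
  | Some s, Some t => (s < t)%R
  | _, _ => False
  end.
Definition Mle (x y : M) : Prop := Mlt x y \/ x = y.

Definition Mmul (x y : M) : M :=
  match x, y with Some s, Some t => Some (s + t)%R | _, _ => None end.

Definition mono_eval (n : nat) (c : R) (I : 'I_n -> nat) (a : 'I_n -> M) : M :=
  Mmul (Some c)
    (\big[Mmul/Some 0%R]_(l < n)
        (if I l == 0 then Some 0%R
         else match a l with Some t => Some (INR (I l) * t)%R | None => None end)).

(* trop(V(f)) for f = sum_{i<k} c_i X^{I_i}: the max of the m_i(a) is -oo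
   or attained by two distinct indices *)
Definition trop_V (n k : nat) (c : 'I_k -> R) (I : 'I_k -> 'I_n -> nat)
    (a : 'I_n -> M) : Prop :=
  (forall i, mono_eval (c i) (I i) a = None) \/
  exists i j : 'I_k, i <> j /\
    mono_eval (c i) (I i) a = mono_eval (c j) (I j) a /\
    forall l, Mle (mono_eval (c l) (I l) a) (mono_eval (c i) (I i) a).

(* None = 0_R ; Some (t, true) = (t,1) ; Some (t, false) = (t,-1). *)
Definition S := option (R * bool).

Definition sabs (x : S) : M :=
  match x with Some (t, _) => Some t | None => None end.

Definition opposite (x y : S) : Prop :=
  exists t, (x = Some (t, true) /\ y = Some (t, false)) \/
            (x = Some (t, false) /\ y = Some (t, true)).

(* hyperaddition: z \in x + y *)
Definition hadd (x y z : S) : Prop :=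
  (Mlt (sabs y) (sabs x) /\ z = x) \/
  (x = y /\ z = x) \/
  (Mlt (sabs x) (sabs y) /\ z = y) \/
  (opposite x y /\ Mle (sabs z) (sabs x)).

Definition smul (x y : S) : S :=
  match x, y with
  | Some (t, p), Some (u, q) => Some ((t + u)%R, p == q)
  | _, _ => None
  end.

Definition sone : S := Some (0%R, true).
Definition spow (x : S) (e : nat) : S := iter e (smul x) sone.

Definition setsum (A B : S -> Prop) : S -> Prop :=
  fun z => exists a b, A a /\ B b /\ hadd a b z.

Definition term_eval (n : nat) (coef : S) (I : 'I_n -> nat) (z : 'I_n -> S) : S :=
  smul coef (\big[smul/sone]_(l < n) spow (z l) (I l)).

Definition poly_eval (n k : nat) (coef : 'I_k -> S) (I : 'I_k -> 'I_n -> nat)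
    (z : 'I_n -> S) : S -> Prop :=
  foldr (fun j A => setsum (eq (term_eval (coef j) (I j) z)) A)
        (eq None) (enum 'I_k).

Definition ftilde_coef (k : nat) (c : 'I_k -> R) (i : 'I_k) : 'I_k -> S :=
  fun j => Some (c j, j != i).

Definition V_ftilde (n k : nat) (c : 'I_k -> R) (I : 'I_k -> 'I_n -> nat)
    (i : 'I_k) (z : 'I_n -> S) : Prop :=
  poly_eval (ftilde_coef c i) I z None.

Definition HV (n k : nat) (c : 'I_k -> R) (I : 'I_k -> 'I_n -> nat)
    (z : 'I_n -> S) : Prop :=
  exists i, V_ftilde c I i z.

Definition s_emb (x : M) : S :=
  match x with Some t => Some (t, true) | None => None end.
Definition phi (n : nat) (a : 'I_n -> M) : 'I_n -> S := fun l => s_emb (a l).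

(* Main.v *)
Require Import Defs.
From mathcomp Require Import all_boot.
From Stdlib Require Import Reals Lra.
From Stdlib Require Import FunctionalExtensionality.
Set Implicit Arguments. Unset Strict Implicit.

Definition sgn (v : M) (s : bool) : S :=
  match v with Some t => Some (t, s) | None => None end.

Lemma spow_some t e : spow (Some (t, true)) e = Some ((INR e * t)%R, true).
Proof.
elim: e => [|e IH]; first by rewrite /spow /= /sone; do 2 f_equal; simpl; lra.
rewrite /spow iterS -/(spow _ e) IH S_INR /=; do 2 f_equal.
lra.
Qed.

Lemma spow_emb (x : M) e :
  spow (s_emb x) e = s_emb (if e == 0 then Some 0%R
         else match x with Some t => Some (INR e * t)%R | None => None end).
Proof.
case: e => [|e] //.
case: x => [t|]; first by rewrite spow_some.
by rewrite /spow iterS.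
Qed.

Lemma TE n c s (I : 'I_n -> nat) a :
  term_eval (Some (c,s)) I (phi a) = sgn (mono_eval c I a) s.
Proof.
rewrite /term_eval /mono_eval.
have -> : \big[smul/sone]_(l < n) spow (phi a l) (I l) =
   s_emb (\big[Mmul/Some 0%R]_(l < n)
        (if I l == 0 then Some 0%R
         else match a l with Some t => Some (INR (I l) * t)%R | None => None end)).
  apply: (big_ind2 (fun u v => u = s_emb v)) => //.
    by move=> x1 x2 y1 y2 -> ->; case: x2 => [?|]; case: y2 => [?|].
  by move=> l _; rewrite /phi spow_emb.
by case: (\big[Mmul/_]_(l < n) _) => [v|] //=; case: s.
Qed.
Lemma Mtri (x y : M) : Mlt x y \/ x = y \/ Mlt y x.
Proof.
case: x => [s|]; case: y => [t|] /=; try tauto.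
case: (Rtotal_order s t) => [h|[h|h]]; [left|right;left;congr Some|right;right]; done.
Qed.
Lemma Mlt_irr x : Mlt x x -> False.
Proof. case: x => [s|] //=; lra. Qed.
Lemma Mlt_trans x y z : Mlt x y -> Mlt y z -> Mlt x z.
Proof. case: x => [s|]; case: y => [t|]; case: z => [u|] //=; lra. Qed.
Lemma Mle_trans x y z : Mle x y -> Mle y z -> Mle x z.
Proof. move=> [h|<-] [h'|<-]; rewrite /Mle; auto; left; exact: Mlt_trans h h'. Qed.
Lemma Mlt_le_trans x y z : Mlt x y -> Mle y z -> Mlt x z.
Proof. move=> h [h'|<-] //; exact: Mlt_trans h h'. Qed.
Lemma Mle_lt_trans x y z : Mle x y -> Mlt y z -> Mlt x z.
Proof. move=> [h|->] h' //; exact: Mlt_trans h h'. Qed.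
Lemma Mle_None x : Mle None x.
Proof. by case: x => [s|]; [left|right]. Qed.
Lemma Mle_refl x : Mle x x.
Proof. by right. Qed.
Lemma Mlt_le x y : Mlt x y -> Mle x y.
Proof. by left. Qed.
Lemma Mlt_nle x y : Mlt x y -> Mle y x -> False.
Proof. move=> h h'; exact: (Mlt_irr (Mlt_le_trans h h')). Qed.
Lemma Mle_total x y : Mle x y \/ Mlt y x.
Proof. case: (Mtri x y) => [h|[h|h]]; [left;left|left;right|right]; done. Qed.
Lemma Mle_None_eq x : Mle x None -> x = None.
Proof. by case: x => [s|] // [] //. Qed.

Lemma abs_eq x y : sabs x = sabs y -> x = y \/ opposite x y.
Proof.
case: x => [[s p]|]; case: y => [[t q]|] //=; last by left.
case=> <-.
case: p; case: q; try by left.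
- by right; exists s; left.
- by right; exists s; right.
Qed.
Lemma opp_abs x y : opposite x y -> sabs x = sabs y.
Proof. by case=> t [[? ?]|[? ?]]; subst. Qed.
Lemma opp_neq x y : opposite x y -> x <> y.
Proof. by case=> t [[? ?]|[? ?]]; subst. Qed.
Lemma opp_sym x y : opposite x y -> opposite y x.
Proof. by case=> t [[? ?]|[? ?]]; subst; exists t; [right|left]. Qed.
Lemma opp_some x y : opposite x y -> x <> None.
Proof. by case=> t [[? ?]|[? ?]]; subst. Qed.

Fixpoint mem_s (x : S) (l : seq S) : Prop :=
  match l with nil => False | y :: l => y = x \/ mem_s x l end.

Definition F (ts : seq S) : S -> Prop := foldr (fun x A => setsum (eq x) A) (eq None) ts.

Lemma F_cons h ts z : F (h :: ts) z <-> exists b, F ts b /\ hadd h b z.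
Proof.
split; first by case=> a [b [<- [Hb Hz]]]; exists b.
by case=> b [Hb Hz]; exists h, b.
Qed.

Lemma F_bound ts z : F ts z -> z = None \/ exists y, mem_s y ts /\ Mle (sabs z) (sabs y).
Proof.
elim: ts z => [|h ts IH] z /=; first by move=> <-; left.
case/F_cons=> b [Hb Hz]; right.
case: Hz => [[_ ->]|[[_ ->]|[[_ ->]|[Ho Hl]]]].
- by exists h; split; [left|right].
- by exists h; split; [left|right].
- case: (IH _ Hb) => [->|[y [Hy Hl]]].
  + by exists h; split; [left|apply: Mle_None].
  + by exists y; split; [right|].
- by exists h; split; [left|].
Qed.

Definition OppMax ts := exists x y, mem_s x ts /\ mem_s y ts /\ opposite x y /\
  forall w, mem_s w ts -> Mle (sabs w) (sabs x).

Lemma F_char ts z : F ts z -> OppMax ts \/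
  ((z = None \/ mem_s z ts) /\ forall w, mem_s w ts -> Mle (sabs w) (sabs z)).
Proof.
elim: ts z => [|h ts IH] z /=; first by move=> <-; right; split; [left|].
case/F_cons=> b [Hb Hz].
have Bb := F_bound Hb.
case: (IH _ Hb) => [[p [q [Hp [Hq [Hpq Hm]]]]]|[Hbm Hbmax]].
- case: (Mle_total (sabs h) (sabs p)) => Hhp.
    left; exists p, q; split; [by right|split; [by right|split=> //]].
    by move=> w [<-|Hw]; auto.
  have Hbh : Mlt (sabs b) (sabs h).
    case: Bb => [->|[y [Hy Hl]]].
      by move: Hhp; case: (sabs h) => [?|] //=; case: (sabs p).
    exact: Mle_lt_trans (Mle_trans Hl (Hm _ Hy)) Hhp.
  case: Hz => [[_ ->]|[[Heq _]|[[Hl _]|[Ho _]]]].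
  + right; split; first by right; left.
    move=> w [<-|Hw]; first exact: Mle_refl.
    by apply: Mlt_le; exact: Mle_lt_trans (Hm _ Hw) Hhp.
  + by subst; case: (Mlt_irr Hbh).
  + by case: (Mlt_nle Hl (Mlt_le Hbh)).
  + by rewrite (opp_abs Ho) in Hbh; case: (Mlt_irr Hbh).
- case: Hz => [[Hl ->]|[[Heq ->]|[[Hl ->]|[Ho Hl]]]].
  + right; split; first by right; left.
    move=> w [<-|Hw]; first exact: Mle_refl.
    by apply: Mlt_le; exact: Mle_lt_trans (Hbmax _ Hw) Hl.
  + subst; right; split; first by right; left.
    by move=> w [<-|Hw]; [exact: Mle_refl|auto].
  + right; split; first by case: Hbm; auto.
    by move=> w [<-|Hw]; [left|auto].
  + left; exists h, b; split; first by left.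
    have Hbm' : mem_s b ts by case: Hbm => // Hn; case: (opp_some (opp_sym Ho)).
    split; first by right.
    split=> //.
    by move=> w [<-|Hw]; [exact: Mle_refl|rewrite (opp_abs Ho); auto].
Qed.

Lemma F_ex ts m : (forall w, mem_s w ts -> Mle (sabs w) m) ->
  exists b, F ts b /\ Mle (sabs b) m.
Proof.
elim: ts => [|h ts IH] Hm /=; first by exists None; split => //; apply: Mle_None.
case: IH => [w Hw|b' [Hb' Hl]]; first by apply: Hm; right.
have Hh : Mle (sabs h) m by apply: Hm; left.
case: (Mtri (sabs b') (sabs h)) => [H|[H|H]].
- by exists h; split => //; apply/F_cons; exists b'; split => //; left.
- case: (abs_eq H) => [E|Ho].
  + by exists h; split => //; apply/F_cons; exists b'; split => //; right; left.
  + exists h; split => //; apply/F_cons; exists b'; split => //.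
    by right; right; right; split; [exact: opp_sym|exact: Mle_refl].
- by exists b'; split => //; apply/F_cons; exists b'; split => //; right; right; left.
Qed.

Lemma F_top ts y : mem_s y ts -> (forall w, mem_s w ts -> Mle (sabs w) (sabs y)) -> F ts y.
Proof.
elim: ts => [|h ts IH] //= Hy Hm.
apply/F_cons.
case: Hy => [Ehy|Hy].
- subst h.
  case: (@F_ex ts (sabs y)) => [w Hw|b [Hb Hl]]; first by apply: Hm; right.
  exists b; split => //.
  case: Hl => [Hl|Hl]; first by left.
  case: (abs_eq Hl) => [->|Ho]; first by right; left.
  by right; right; right; split; [exact: opp_sym|exact: Mle_refl].
- exists y; split; first by apply: IH => // w Hw; apply: Hm; right.
  case: (Hm h (or_introl erefl)) => [Hl|Hl]; first by right; right; left.
  case: (abs_eq Hl) => [->|Ho]; first by right; left.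
  by right; right; right; split => //; rewrite Hl; exact: Mle_refl.
Qed.

Lemma F_ball ts x y : mem_s x ts -> mem_s y ts -> opposite x y ->
  (forall w, mem_s w ts -> Mle (sabs w) (sabs x)) ->
  forall z, Mle (sabs z) (sabs x) -> F ts z.
Proof.
elim: ts => [|h ts IH] //= Hx Hy Ho Hm z Hz.
apply/F_cons.
have Hm' : forall w, mem_s w ts -> Mle (sabs w) (sabs x) by move=> w Hw; apply: Hm; right.
case: Hx => [Ehx|Hx]; case: Hy => [Ehy|Hy].
- by subst; case: (opp_neq Ho).
- subst h; exists y; split.
    by apply: F_top => //; rewrite -(opp_abs Ho).
  by right; right; right.
- subst h; exists x; split; first exact: F_top.
  by right; right; right; split; [exact: opp_sym|rewrite -(opp_abs Ho)].
- have IH' := IH Hx Hy Ho Hm'.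
  have Hh : Mle (sabs h) (sabs x) by apply: Hm; left.
  case: (Mle_total (sabs z) (sabs h)) => Hzh.
  + case Eh: h => [[s p]|].
    * exists (Some (s, ~~ p)); split.
        by apply: IH'; move: Hh; rewrite Eh.
      right; right; right; split; last by move: Hzh; rewrite Eh.
      by exists s; case: (p) => /=; [left|right].
    * exists z; split; first exact: IH'.
      subst h; case: z Hzh {Hz} => [[s p]|] /=; last by right; left.
      by case=> //.
  + exists z; split; first exact: IH'.
    by right; right; left.
Qed.

Lemma mem_map_s (T : Type) (f : T -> S) s y : mem_s y (map f s) -> exists j, y = f j.
Proof. elim: s => [|h s IH] //= [<-|H]; [by exists h|exact: IH]. Qed.
Lemma mem_map_in (T : eqType) (f : T -> S) s j : j \in s -> mem_s (f j) (map f s).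
Proof.
elim: s => [|h s IH] //=; rewrite in_cons; case/orP => [/eqP ->|H]; [by left|right; exact: IH].
Qed.
Lemma sabs_sgn v s : sabs (sgn v s) = v.
Proof. by case: v. Qed.

Theorem proposition4p14 (n k : nat) (c : 'I_k -> R) (I : 'I_k -> 'I_n -> nat)
    (hk : 0 < k) (hI : forall i j : 'I_k, I i = I j -> i = j) :
  (forall z : 'I_n -> S,
     (exists a : 'I_n -> M, trop_V c I a /\ z = phi a) <->
     (HV c I z /\ exists a : 'I_n -> M, z = phi a)) /\
  (forall a b : 'I_n -> M, phi a = phi b -> a = b).
Proof.
set t := fun i a j => term_eval (ftilde_coef c i j) (I j) (phi a).
have Et : forall i a j, t i a j = sgn (mono_eval (c j) (I j) a) (j != i).
  by move=> i a j; rewrite /t /ftilde_coef TE.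
have EV : forall i a, V_ftilde c I i (phi a) <-> F (map (t i a) (enum 'I_k)) None.
  by move=> i a; rewrite /V_ftilde /poly_eval /F foldr_map.
have Mem : forall i a j, mem_s (t i a j) (map (t i a) (enum 'I_k)).
  by move=> i a j; apply: mem_map_in; rewrite mem_enum.
have Abs : forall i a w, mem_s w (map (t i a) (enum 'I_k)) ->
    exists l, w = t i a l /\ sabs w = mono_eval (c l) (I l) a.
  move=> i a w /mem_map_s [l ->]; exists l; split => //; by rewrite Et sabs_sgn.
split; last first.
  move=> a b H; apply: functional_extensionality => l.
  have := congr1 (fun f => f l) H; rewrite /phi /=.
  by case: (a l) => [?|]; case: (b l) => [?|] //= [->].
move=> z; split.
- case=> a [Ht ->]; split; last by exists a.
  have Htop : forall i, mono_eval (c i) (I i) a = None ->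
      (forall l, Mle (mono_eval (c l) (I l) a) (mono_eval (c i) (I i) a)) ->
      HV c I (phi a).
    move=> i Hi Hl; exists i; apply/EV.
    have <- : t i a i = None by rewrite Et Hi.
    apply: F_top; first exact: Mem.
    move=> w /Abs [l [-> ->]]; rewrite Et sabs_sgn; exact: Hl.
  case: Ht => [Hn|[i [j [Hij [Heq Hl]]]]].
  + have i0 : 'I_k := Ordinal hk.
    apply: (Htop i0 (Hn i0)) => l; rewrite Hn Hn; exact: Mle_refl.
  + case Em: (mono_eval (c i) (I i) a) => [mu|]; last first.
      exact: (Htop i Em Hl).
    exists i; apply/EV.
    have Ho : opposite (t i a i) (t i a j).
      rewrite !Et -Heq Em eqxx.
      have -> : (j != i) = true by apply/eqP => E; apply: Hij.
      by exists mu; right.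
    apply: (F_ball (Mem i a i) (Mem i a j) Ho).
      move=> w /Abs [l [-> ->]]; rewrite Et sabs_sgn; exact: Hl.
    exact: Mle_None.
- case=> [[i Hi] [a Ez]]; exists a; split => //.
  subst z; move/EV: Hi => /F_char [[x [y [Hx [Hy [Ho Hm]]]]]|[_ Hm]].
  + case: (Abs _ _ _ Hx) => j1 [Ex Ax]; case: (Abs _ _ _ Hy) => j2 [Ey Ay].
    right; exists j1, j2; split.
      by move=> E; subst; apply: (opp_neq Ho).
    split; first by rewrite -Ax -Ay; exact: opp_abs.
    by move=> l; rewrite -Ax; have := Hm _ (Mem i a l); rewrite Et sabs_sgn.
  + left => l; apply: Mle_None_eq.
    by have := Hm _ (Mem i a l); rewrite Et sabs_sgn.
Qed.
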